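(* Let $\eta\colon\mathcal{D}\to\mathcal{D}$ be a polynomial $\tau$-equivariant map, i.e. of the form $\eta(\lambda_1,\lambda_2)=(\Psi(\lambda_1,\lambda_2),\Psi(\lambda_2,\lambda_1))$ with $\Psi$ polynomial. Then $\eta$ extends to a polynomial map $\Phi\colon\mathcal{M}(2;\mathbb{C})\to\mathcal{M}(2;\mathbb{C})$ compatible with conjugation (i.e. $\Phi_{|\mathcal{D}}=\eta$).
   Context: $\mathcal{D}$ is the set of diagonal $2\times2$ complex matrices, identified with $\mathbb{C}^2$ via $\mathrm{diag}(\lambda_1,\lambda_2)\mapsto(\lambda_1,\lambda_2)$; $\tau(\lambda_1,\lambda_2)=(\lambda_2,\lambda_1)$. A map $\Phi$ is compatible with conjugation if $\mathrm{A}\Phi(\mathrm{M})\mathrm{A}^{-1}=\Phi(\mathrm{A}\mathrm{M}\mathrm{A}^{-1})$ for all $\mathrm{A}\in\mathrm{GL}(2;\mathbb{C})$ and all $\mathrm{M}$ where defined. *)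

(* Defs.v *)
From HB Require Import structures.
From mathcomp Require Import all_boot all_order all_algebra.
From mathcomp Require Import reals.
From mathcomp Require Import complex.
From mathcomp Require Import mpoly.
Set Implicit Arguments. Unset Strict Implicit. Unset Printing Implicit Defensive.
Import Order.TTheory GRing.Theory Num.Theory.
Local Open Scope ring_scope.

Definition CC (R : realType) : Type := complex R.

Definition diag2 (K : nzRingType) (l1 l2 : K) : 'M[K]_2 :=
  \matrix_(i < 2, j < 2)
    (if i == j then (if val i == 0%N then l1 else l2) else 0).

Definition pt2 (K : Type) (l1 l2 : K) : 'I_2 -> K :=
  fun i => if val i == 0%N then l1 else l2.

Definition mx_entries (K : Type) (M : 'M[K]_2) : 'I_4 -> K :=
  fun k => M (inord (val k %/ 2)) (inord (val k %% 2)).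

Definition is_polynomial_map (K : comNzRingType) (Phi : 'M[K]_2 -> 'M[K]_2) : Prop :=
  exists P : 'M[{mpoly K[4]}]_2,
    forall M : 'M[K]_2, forall i j : 'I_2, Phi M i j = (P i j).@[mx_entries M].

Definition compatible_with_conjugation (K : comUnitRingType) (Phi : 'M[K]_2 -> 'M[K]_2) : Prop :=
  forall A M : 'M[K]_2, A \in unitmx ->
    A *m Phi M *m invmx A = Phi (A *m M *m invmx A).

(* Main.v *)
Require Import Defs.
From HB Require Import structures.
From mathcomp Require Import all_boot all_order all_algebra.
From mathcomp Require Import reals.
From mathcomp Require Import complex.
From mathcomp Require Import mpoly.
Local Open Scope ring_scope.
Set Implicit Arguments. Unset Strict Implicit.
Import GRing.Theory.

Definition F (K : comNzRingType) (c : 'X_{1..2} -> K) (S : seq 'X_{1..2}) (M : 'M[K]_2) : 'M[K]_2 :=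
  \sum_(m <- S) c m *: (M ^+ m ord0 * ((\tr M)%:M - M) ^+ m ord_max).

Lemma F_map (K L : comNzRingType) (f : {rmorphism K -> L}) c S M :
  map_mx f (F c S M) = F (f \o c) S (map_mx f M).
Proof.
rewrite /F rmorph_sum; apply: eq_bigr => m _ /=.
rewrite map_mxZ (rmorphM (map_mx f : 'M_2 -> 'M_2)) !rmorphXn rmorphB /=.
by rewrite trace_map_mx map_scalar_mx.
Qed.

Section Conj.
Variables (K : comUnitRingType) (A : 'M[K]_2).
Hypothesis hA : A \is a GRing.unit.
Let cj (X : 'M[K]_2) := A * X * A^-1.
Lemma cjM X Y : cj (X * Y) = cj X * cj Y.
Proof. by rewrite /cj !mulrA divrK. Qed.
Lemma cjX X n : cj (X ^+ n) = cj X ^+ n.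
Proof.
elim: n => [|n IH]; first by rewrite !expr0 /cj mulr1 divrr.
by rewrite !exprS cjM IH.
Qed.
Lemma cjZ a X : cj (a *: X) = a *: cj X.
Proof. by rewrite /cj -scalerAr -scalerAl. Qed.
Lemma cjB X Y : cj (X - Y) = cj X - cj Y.
Proof. by rewrite /cj mulrBr mulrBl. Qed.
Lemma cjS (t : K) : cj t%:M = t%:M.
Proof. by rewrite /cj -!mulmxE scalar_mxC mulmxE -mulrA divrr ?mulr1. Qed.
Lemma cjT X : \tr (cj X) = \tr X.
Proof. by rewrite /cj -!mulmxE mxtrace_mulC mulmxA mulmxE mulVr ?mul1r. Qed.
Lemma cjF c S X : cj (F c S X) = F c S (cj X).
Proof.
rewrite /F /cj big_distrr big_distrl /=; apply: eq_bigr => m _.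
by rewrite -/(cj _) cjZ cjM !cjX cjB cjS cjT.
Qed.
End Conj.

Section Diag.
Variable K : comNzRingType.
Lemma d_mul (a b c d : K) : diag2 a b * diag2 c d = diag2 (a * c) (b * d).
Proof.
apply/matrixP => i j; rewrite !mxE big_ord_recl big_ord1 !mxE.
by case: i => [[|[|//]] ?]; case: j => [[|[|//]] ?] /=; rewrite ?mulr0 ?mul0r ?addr0 ?add0r.
Qed.
Lemma d_B (a b c d : K) : diag2 a b - diag2 c d = diag2 (a - c) (b - d).
Proof.
apply/matrixP => i j; rewrite !mxE.
by case: i => [[|[|//]] ?]; case: j => [[|[|//]] ?] /=; rewrite ?subr0.
Qed.
Lemma d_Z (t a b : K) : t *: diag2 a b = diag2 (t * a) (t * b).
Proof.
apply/matrixP => i j; rewrite !mxE.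
by case: i => [[|[|//]] ?]; case: j => [[|[|//]] ?] /=; rewrite ?mulr0.
Qed.
Lemma d_S (t : K) : t%:M = diag2 t t.
Proof.
apply/matrixP => i j; rewrite !mxE.
by case: i => [[|[|//]] ?]; case: j => [[|[|//]] ?] /=.
Qed.
Lemma d_T (a b : K) : \tr (diag2 a b) = a + b.
Proof. by rewrite /mxtrace big_ord_recl big_ord1 !mxE. Qed.
Lemma d_X (a b : K) n : diag2 a b ^+ n = diag2 (a ^+ n) (b ^+ n).
Proof.
elim: n => [|n IH]; first by rewrite !expr0 -[1]/(1%:M) d_S.
by rewrite !exprS IH d_mul.
Qed.
Lemma d_sum (I : Type) (s : seq I) (f g : I -> K) :
  \sum_(i <- s) diag2 (f i) (g i) = diag2 (\sum_(i <- s) f i) (\sum_(i <- s) g i).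
Proof.
elim: s => [|x s IH]; rewrite ?big_nil ?big_cons ?IH; apply/matrixP => i j; rewrite !mxE;
by case: i => [[|[|//]] ?]; case: j => [[|[|//]] ?] /=; rewrite ?addr0 ?mxE.
Qed.
End Diag.

Definition genX (K : comNzRingType) : 'M[{mpoly K[4]}]_2 :=
  \matrix_(i < 2, j < 2) 'X_(inord (i * 2 + j)).

Lemma genX_eval (K : comNzRingType) (M : 'M[K]_2) :
  map_mx (meval (mx_entries M)) (genX K) = M.
Proof.
apply/matrixP => i j; rewrite !mxE mevalXU /mx_entries.
have h (k : nat) : (k < 4)%N -> \val (inord k : 'I_4) = k by exact: inordK.
rewrite h; last by case: i j => [[|[|//]] ?] [[|[|//]] ?].
by case: i => [[|[|//]] Hi]; case: j => [[|[|//]] Hj];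
  congr (M _ _); apply/val_inj; rewrite /= inordK.
Qed.

Theorem proposition2p4 (R : realType) (Psi : {mpoly (CC R)[2]}) :
  exists Phi : 'M[CC R]_2 -> 'M[CC R]_2,
    [/\ is_polynomial_map Phi,
        compatible_with_conjugation Phi &
        forall l1 l2 : CC R,
          Phi (diag2 l1 l2) = diag2 Psi.@[pt2 l1 l2] Psi.@[pt2 l2 l1]].
Proof.
exists (F (fun m => Psi@_m) (msupp Psi)); split.
- exists (F (fun m => (Psi@_m)%:MP) (msupp Psi) (genX _)) => M i j.
  have := F_map (meval (mx_entries M)) (fun m => (Psi@_m)%:MP) (msupp Psi) (genX _).
  rewrite genX_eval => /matrixP /(_ i j); rewrite mxE => ->.
  rewrite /F; congr (fun X : 'M_2 => X i j).
  by apply: eq_bigr => m _; rewrite /= mevalC.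
- move=> A M hA; rewrite !mulmxE; have -> : invmx A = A^-1 by [].
  exact: cjF.
- move=> l1 l2; rewrite /F.
  under eq_bigr => m _ do rewrite d_T d_S d_B d_X d_X d_mul d_Z.
  rewrite d_sum !mevalE.
  congr diag2; apply: eq_bigr => m _; rewrite big_ord_recl big_ord1 /pt2 /=;
    congr (_ * (_ * _ ^+ m _)).
all: try by rewrite addrK.
all: try by rewrite (addrC l1) addrK.
all: first [by apply: val_inj | by apply/val_inj | by rewrite /ord_max /lift; apply: val_inj].
Qed.
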